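(* Let $q$ be a prime power and $T\in\mathbb F_q[X,Y,Z]$ a reduced polynomial. Suppose either (1) $T$ satisfies Property (a): $T(a,0,z)=T(0,b,z)=z$ for all $a,b,z\in\mathbb F_q$, together with at least one of Property (c): for all $a,b,c,d\in\mathbb F_q$ with $a\neq c$ there is a unique $x$ with $T(x,a,b)=T(x,c,d)$; or Property (e): for all $a,b,c,d\in\mathbb F_q$ with $a\neq c$ there is a unique pair $(y,z)$ with $T(a,y,z)=b$ and $T(c,y,z)=d$; or (2) $T$ satisfies Property (d): for all $a,b,c\in\mathbb F_q$ there is a unique $z$ with $T(a,b,z)=c$. Then $T(X,Y,Z)$ is a permutation polynomial over $\mathbb F_q$, i.e. for every $d\in\mathbb F_q$ the equation $T(x,y,z)=d$ has exactly $q^2$ solutions $(x,y,z)\in\mathbb F_q^3$.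
   Context: A polynomial is reduced if its degree in each variable is less than $q$. *)

(* Defs.v *)
From HB Require Import structures.
From mathcomp Require Import all_boot all_order all_algebra all_field.
From mathcomp Require Import mpoly.
Set Implicit Arguments. Unset Strict Implicit. Unset Printing Implicit Defensive.
Import GRing.Theory.
Local Open Scope ring_scope.

Definition ev3 (F : finFieldType) (T : {mpoly F[3]}) (x y z : F) : F :=
  T.@[fun i : 'I_3 => nth 0 [:: x; y; z] i].

Definition reduced (F : finFieldType) (T : {mpoly F[3]}) : Prop :=
  forall m, m \in msupp T -> forall i : 'I_3, (m i < #|F|)%N.

Definition propA (F : finFieldType) (T : {mpoly F[3]}) : Prop :=
  forall a b z : F, ev3 T a 0 z = z /\ ev3 T 0 b z = z.

Definition propC (F : finFieldType) (T : {mpoly F[3]}) : Prop :=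
  forall a b c d : F, a != c -> exists! x : F, ev3 T x a b = ev3 T x c d.

Definition propE (F : finFieldType) (T : {mpoly F[3]}) : Prop :=
  forall a b c d : F, a != c ->
    exists! yz : F * F, ev3 T a yz.1 yz.2 = b /\ ev3 T c yz.1 yz.2 = d.

Definition propD (F : finFieldType) (T : {mpoly F[3]}) : Prop :=
  forall a b c : F, exists! z : F, ev3 T a b z = c.

Definition perm_poly3 (F : finFieldType) (T : {mpoly F[3]}) : Prop :=
  forall d : F, #|[set t : F * F * F | ev3 T t.1.1 t.1.2 t.2 == d]| = (#|F| ^ 2)%N.

(* Main.v *)
Require Import Defs.
From mathcomp Require Import all_boot all_order all_algebra all_field.
From mathcomp Require Import mpoly.
Set Implicit Arguments. Unset Strict Implicit. Unset Printing Implicit Defensive.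

Lemma sum_uniq (X : finType) (P : pred X) :
  (exists x, P x /\ forall y, P y -> y = x) -> (\sum_x (P x : nat) = 1)%N.
Proof.
case=> x0 [Px0 U]; rewrite (bigD1 x0) //= Px0 big1 // => y /negbTE ne.
by case Py: (P y) => //; rewrite (U y Py) eqxx in ne.
Qed.

Lemma card_triple (F : finType) (f : F -> F -> F -> bool) :
  #|[set t : F * F * F | f t.1.1 t.1.2 t.2]| =
  (\sum_x \sum_y \sum_z (f x y z : nat))%N.
Proof.
rewrite pair_big /= pair_big /= -sum1_card big_mkcond /=.
by apply: eq_bigr => t _; rewrite inE; case: (f _ _ _).
Qed.

Lemma sum_const1 (F : finType) (g : F -> nat) :
  (forall x, g x = 1%N) -> (\sum_x g x = #|F|)%N.
Proof. by move=> H; rewrite (eq_bigr (fun _ => 1%N)) // sum1_card. Qed.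

Theorem corollary4p5 (F : finFieldType) (T : {mpoly F[3]}) :
  reduced T ->
  ((propA T /\ (propC T \/ propE T)) \/ propD T) ->
  perm_poly3 T.
Proof.
move=> _ H d; rewrite (card_triple (fun x y z => ev3 T x y z == d)).
have sz : forall w : F, (\sum_(z : F) (z == w : nat))%N = 1%N.
  by move=> w; apply: sum_uniq; exists w; split => // y /eqP.
case: H => [[A [C|E]]|D].
- rewrite exchange_big /= (eq_bigr (fun _ => #|F|)); first by rewrite sum_nat_const expnS expn1.
  move=> y _; rewrite exchange_big /=.
  have [->|ny] := eqVneq y 0%R.
    rewrite (eq_bigr (fun z => #|F| * (z == d : nat))%N).
      by rewrite -big_distrr /= sz muln1.
    move=> z _; rewrite (eq_bigr (fun _ => (z == d : nat))); first by rewrite sum_nat_const.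
    by move=> x _; rewrite (proj1 (A x 0%R z)).
  apply: sum_const1 => z; apply: sum_uniq.
  have [x [Hx U]] := C y z 0%R d ny.
  exists x; split.
    by rewrite (proj1 (A x 0%R d)) in Hx; rewrite Hx.
  move=> x' /eqP Hx'; apply/esym/U; by rewrite (proj1 (A x' 0%R d)).
- rewrite (eq_bigr (fun _ => #|F|)); first by rewrite sum_nat_const expnS expn1.
  move=> x _; rewrite exchange_big /=.
  have [->|nx] := eqVneq x 0%R.
    rewrite (eq_bigr (fun z => #|F| * (z == d : nat))%N).
      by rewrite -big_distrr /= sz muln1.
    move=> z _; rewrite (eq_bigr (fun _ => (z == d : nat))); first by rewrite sum_nat_const.
    by move=> y _; rewrite (proj2 (A 0%R y z)).
  apply: sum_const1 => z; apply: sum_uniq.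
  have [[y z'] [[/= Hy Hz] U]] := E x d 0%R z nx.
  rewrite (proj2 (A 0%R y z')) in Hz; subst z'.
  exists y; split; first by rewrite Hy.
  move=> y' /eqP Hy'.
  have := U (y', z); rewrite /= (proj2 (A 0%R y' z)) => /(_ (conj Hy' erefl)).
  by case=> ->.
- rewrite (eq_bigr (fun _ => #|F|)); first by rewrite sum_nat_const expnS expn1.
  move=> x _; apply: sum_const1 => y; apply: sum_uniq.
  have [z [Hz U]] := D x y d.
  by exists z; split; [rewrite Hz | move=> z' /eqP /U ->].
Qed.
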